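(* Let $(B,\mathfrak{m})$ be a deformation base, $X$ a vector space and $Y\subseteq B\widehat{\otimes}X$ a pseudoclosed $B$-submodule. Then $BY=B\cdot Y$ and $\mathfrak{m}^kY=\mathfrak{m}^k\cdot Y$ for every $k$.
   Context: Deformation base: complete local Noetherian unital $\mathbb{C}$-algebra $B$ with maximal ideal $\mathfrak{m}$, $B/\mathfrak{m}=\mathbb{C}$; $B\widehat{\otimes}X=\varprojlim(B/\mathfrak{m}^k\otimes X)$. For a subspace $Y\subseteq B\widehat{\otimes}X$: $BY=\{\sum_{i\ge0}b_iy_i:y_i\in Y,b_i\in\mathfrak{m}^{k_i},k_i\to\infty\}$ (convergent series), $\mathfrak{m}^kY$ is the same set with all $k_i\ge k$, while $B\cdot Y$ and $\mathfrak{m}^k\cdot Y$ denote the finite spans of products $by$ with $b\in B$ (resp. $b\in\mathfrak{m}^k$) and $y\in Y$. $Y$ is pseudoclosed if $BY\subseteq Y$. *)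

(* Defs.v *)
From HB Require Import structures.
From mathcomp Require Import all_boot all_order all_algebra.
From mathcomp Require Import boolp reals.
From mathcomp.real_closed Require Export complex.

Set Implicit Arguments.
Unset Strict Implicit.
Unset Printing Implicit Defensive.

Import Order.TTheory GRing.Theory Num.Theory.
Local Open Scope ring_scope.

Section DeformationDefs.
Variable K : fieldType.
Variable B : comAlgType K.

Definition is_ideal (I : B -> Prop) : Prop :=
  [/\ I 0, (forall a b, I a -> I b -> I (a + b)) & (forall r a, I a -> I (r * a))].

Definition fin_gen_ideal (I : B -> Prop) : Prop :=
  exists s : seq B, (forall g, g \in s -> I g) /\
    forall a, I a -> exists c : seq B, a = \sum_(i < size s) c`_i * s`_i.

Fixpoint ipow (m : B -> Prop) (k : nat) : B -> Prop :=
  match k with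
  | 0 => fun _ => True
  | k'.+1 => fun b => exists s : seq (B * B),
       (forall p, p \in s -> m p.1 /\ ipow m k' p.2) /\ b = \sum_(p <- s) p.1 * p.2
  end.

(* (B, m) is a deformation base: complete local Noetherian unital K-algebra
   with maximal ideal m and residue field B/m = K. *)
Definition deformation_base (m : B -> Prop) : Prop :=
  [/\ is_ideal m,
      ~ m 1,
      (forall b, ~ m b -> exists c, b * c = 1),
      (forall b, exists c : K, m (b - c%:A))          (* B/m = K *)
    & [/\ (forall I, is_ideal I -> fin_gen_ideal I),
      (forall b, (forall k, ipow m k b) -> b = 0)
    & (forall b : nat -> B, (forall k, ipow m k (b k.+1 - b k)) ->
         exists a, forall k, ipow m k (a - b k))]].

(* continuous linear functionals on B: linear maps B -> K vanishing on some m^k,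
   i.e. the union of the duals (B/m^k)^* *)
Definition lin_fun (phi : B -> K) : Prop :=
  forall (c : K) (a b : B), phi (c *: a + b) = c * phi a + phi b.
Definition cont_at (m : B -> Prop) (k : nat) (phi : B -> K) : Prop :=
  lin_fun phi /\ forall b, ipow m k b -> phi b = 0.
Definition cont (m : B -> Prop) (phi : B -> K) : Prop := exists k, cont_at m k phi.

Variable X : lmodType K.

(* Model of B \widehat{\otimes} X = lim_k (B/m^k (x) X) = lim_k Hom((B/m^k)^*, X)
   = Hom_K(B', X), B' the continuous dual.  An element is a function on
   functionals, K-linear on continuous functionals and normalized to 0 elsewhere. *)
Definition tens := (B -> K) -> X.

Definition ctens (m : B -> Prop) (F : tens) : Prop :=
  [/\ (forall phi, ~ cont m phi -> F phi = 0),
      (forall phi psi, cont m phi -> cont m psi ->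
          F (fun a => phi a + psi a) = F phi + F psi)
    & (forall (c : K) phi, cont m phi -> F (fun a => c * phi a) = c *: F phi)].

Definition tzero : tens := fun _ => 0.
Definition tadd (F G : tens) : tens := fun phi => F phi + G phi.
Definition tact (m : B -> Prop) (b : B) (F : tens) : tens :=
  fun phi => if pselect (cont m phi) then F (fun a => phi (b * a)) else 0.

(* congruence modulo m^k, i.e. equality of the images in B/m^k (x) X *)
Definition eqmod (m : B -> Prop) (k : nat) (F G : tens) : Prop :=
  forall phi, cont_at m k phi -> F phi = G phi.

Definition submodule (m : B -> Prop) (Y : tens -> Prop) : Prop :=
  [/\ (forall F, Y F -> ctens m F), Y tzero,
      (forall F G, Y F -> Y G -> Y (tadd F G))
    & (forall b F, Y F -> Y (tact m b F))].

(* finite span P . Y of products b y with P b, y in Y (B . Y for P = True,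
   m^k . Y for P = ipow m k) *)
Definition fspan (m : B -> Prop) (P : B -> Prop) (Y : tens -> Prop) (z : tens) : Prop :=
  exists (n : nat) (b : nat -> B) (y : nat -> tens),
    (forall i, (i < n)%N -> P (b i) /\ Y (y i)) /\
    z = (fun phi => \sum_(i < n) tact m (b i) (y i) phi).

(* m^k Y : convergent series sum_i b_i y_i, y_i in Y, b_i in m^(k_i),
   k_i >= k, k_i -> oo (BY is the case k = 0) *)
Definition sspan (m : B -> Prop) (k : nat) (Y : tens -> Prop) (z : tens) : Prop :=
  ctens m z /\
  exists (b : nat -> B) (y : nat -> tens) (e : nat -> nat),
    (forall i, [/\ Y (y i), (k <= e i)%N & ipow m (e i) (b i)]) /\
    (forall K, exists N, forall i, (N <= i)%N -> (K <= e i)%N) /\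
    (forall K, exists N0, forall N, (N0 <= N)%N ->
        eqmod m K z (fun phi => \sum_(i < N) tact m (b i) (y i) phi)).

Definition pseudoclosed (m : B -> Prop) (Y : tens -> Prop) : Prop :=
  forall z, sspan m 0 Y z -> Y z.

End DeformationDefs.

(* Main.v *)
Require Import Defs.
From HB Require Import structures.
From mathcomp Require Import all_boot all_order all_algebra.
From mathcomp Require Import boolp reals.
From mathcomp.real_closed Require Import complex.
From mathcomp Require Import zify.

Set Implicit Arguments.
Unset Strict Implicit.
Import Order.TTheory GRing.Theory Num.Theory.
Local Open Scope ring_scope.

Section Ipow.
Variables (K : fieldType) (B : comAlgType K) (m : B -> Prop).
Hypothesis Hm : is_ideal m.

Lemma ipow0 j : ipow m j 0.
Proof. case: j => [//|j]; exists [::]; split => //; by rewrite big_nil. Qed.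

Lemma ipowD j a b : ipow m j a -> ipow m j b -> ipow m j (a + b).
Proof.
case: j => [//|j] [s [Hs ->]] [t [Ht ->]].
exists (s ++ t); split; last by rewrite big_cat.
move=> p; rewrite mem_cat => /orP [] ?; [exact: Hs | exact: Ht].
Qed.

Lemma ipowM1 j a c : m a -> ipow m j c -> ipow m j.+1 (a * c).
Proof.
move=> ha hc; exists [:: (a, c)]; split; last by rewrite big_seq1.
by move=> p; rewrite inE => /eqP ->.
Qed.

Lemma ipowMl j r a : ipow m j a -> ipow m j (r * a).
Proof.
case: j => [//|j] [s [Hs ->]]. case: Hm => _ _ Hmul.
exists [seq (r * p.1, p.2) | p <- s]; split.
- move=> q /mapP [p ps ->] /=; have [h1 h2] := Hs p ps; split=> //; exact: Hmul.
- rewrite big_map mulr_sumr; apply: eq_bigr => p _; by rewrite mulrA.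
Qed.

Lemma ipowMr j r a : ipow m j a -> ipow m j (a * r).
Proof. by rewrite mulrC; apply: ipowMl. Qed.

Lemma ipowS j b : ipow m j.+1 b -> ipow m j b.
Proof.
elim: j b => [//|j IH] b [s [Hs ->]].
exists s; split => // p ps; have [h1 h2] := Hs p ps; split=> //; exact: IH.
Qed.

Lemma ipow_le j j' b : (j <= j')%N -> ipow m j' b -> ipow m j b.
Proof.
move=> /subnK <-. elim: (j' - j)%N b => [|d IH] b; first by rewrite add0n.
rewrite addSn => /ipowS; exact: IH.
Qed.

Lemma ipow_ideal k : is_ideal (ipow m k).
Proof. split; [exact: ipow0 | exact: ipowD | exact: ipowMl]. Qed.

Lemma ipow_decomp k (g : nat -> B) r :
  (forall a, ipow m k a -> exists c : nat -> B, a = \sum_(l < r) c l * g l) ->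
  forall j a, ipow m (j + k) a ->
    exists c : nat -> B, (forall l, ipow m j (c l)) /\ a = \sum_(l < r) c l * g l.
Proof.
move=> Hgen; elim=> [|j IH] a.
- rewrite add0n => /Hgen [c ->]; by exists c.
- rewrite addSn => -[s [Hs ->]].
  elim: s Hs => [|p s IHs] Hs.
  + exists (fun _ => 0); split => [l|]; first exact: ipow0.
    rewrite big_nil big1 // => l _; by rewrite mul0r.
  + have [hp1 hp2] := Hs p (mem_head _ _).
    have [d [Hd Ep]] := IH _ hp2.
    have Hs' : forall q, q \in s -> m q.1 /\ ipow m (j + k) q.2.
      by move=> q qs; apply: Hs; rewrite in_cons qs orbT.
    have [c [Hc Es]] := IHs Hs'.
    exists (fun l => p.1 * d l + c l); split.
    * move=> l; apply: ipowD; [exact: ipowM1 | exact: Hc].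
    * rewrite big_cons Es Ep mulr_sumr -big_split /=; apply: eq_bigr => l _.
      by rewrite mulrDl mulrA.
Qed.

End Ipow.

Definition evlim (V : zmodType) (f : nat -> V) : V :=
  match pselect (exists v, exists N0, forall N, (N0 <= N)%N -> f N = v) with
  | left H => sval (cid H)
  | right _ => 0
  end.

Lemma evlimE (V : zmodType) (f : nat -> V) N0 :
  (forall N, (N0 <= N)%N -> f N = f N0) -> evlim f = f N0.
Proof.
move=> H; rewrite /evlim; case: pselect => [h|hn]; last first.
  by exfalso; apply: hn; exists (f N0), N0.
case: (cid h) => v [N1 HN1] /=.
by rewrite -(HN1 (maxn N0 N1) (leq_maxr _ _)) H // leq_maxl.
Qed.

Lemma sum_stab (V : zmodType) (f : nat -> V) N N' :
  (forall i, (N <= i)%N -> f i = 0) -> (N <= N')%N ->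
  \sum_(i < N') f i = \sum_(i < N) f i.
Proof.
move=> H le. rewrite -!(big_mkord xpredT) (@big_cat_nat _ _ _ N 0 N' _ _ (leq0n N) le) /=.
rewrite [X in _ + X]big1_seq ?addr0 // => i /andP[_].
rewrite mem_index_iota => /andP[hi _]; exact: H.
Qed.

Section Tens.
Variables (K : fieldType) (B : comAlgType K) (m : B -> Prop).
Hypothesis Hm : is_ideal m.
Variable X : lmodType K.

Lemma tactE c (F : tens B X) phi : cont m phi -> tact m c F phi = F (fun a => phi (c * a)).
Proof. by move=> h; rewrite /tact; case: pselect. Qed.

Lemma tactN c (F : tens B X) phi : ~ cont m phi -> tact m c F phi = 0.
Proof. by move=> h; rewrite /tact; case: pselect. Qed.

Section Lin.
Variable phi : B -> K.
Hypothesis H : lin_fun phi.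
Lemma lin0 : phi 0 = 0.
Proof.
have := H 1 0 0; rewrite scale1r addr0 mul1r.
by move=> /(congr1 (fun t => t - phi 0)); rewrite subrr addrK.
Qed.
Lemma linD a b : phi (a + b) = phi a + phi b.
Proof. by have := H 1 a b; rewrite scale1r mul1r. Qed.
Lemma linsum r (f : nat -> B) : phi (\sum_(l < r) f l) = \sum_(l < r) phi (f l).
Proof.
elim: r => [|r IH]; first by rewrite !big_ord0 lin0.
by rewrite !big_ord_recr /= linD IH.
Qed.
End Lin.

Lemma cont_at_le k k' phi : cont_at m k phi -> (k <= k')%N -> cont_at m k' phi.
Proof. move=> [hl hv] le; split => // b hb; apply: hv; exact: ipow_le hb. Qed.

Lemma cont_at_shift k c phi : cont_at m k phi -> cont_at m k (fun a => phi (c * a)).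
Proof.
move=> [hl hv]; split.
- by move=> d a b; rewrite mulrDr -scalerAr; apply: hl.
- by move=> b hb; apply: hv; apply: ipowMl.
Qed.

Lemma cont_shift c phi : cont m phi -> cont m (fun a => phi (c * a)).
Proof. by move=> [k h]; exists k; apply: cont_at_shift. Qed.

Lemma cont_at_add k phi psi : cont_at m k phi -> cont_at m k psi ->
  cont_at m k (fun a => phi a + psi a).
Proof.
move=> [hl hv] [hl' hv']; split.
- by move=> d a b; rewrite hl hl' mulrDr addrACA.
- by move=> b hb; rewrite hv // hv' // addr0.
Qed.

Lemma cont_add phi psi : cont m phi -> cont m psi -> cont m (fun a => phi a + psi a).
Proof.
move=> [k1 h1] [k2 h2]; exists (maxn k1 k2); apply: cont_at_add.
  exact: cont_at_le h1 (leq_maxl _ _).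
exact: cont_at_le h2 (leq_maxr _ _).
Qed.

Lemma cont_at_scale k d phi : cont_at m k phi -> cont_at m k (fun a => d * phi a).
Proof.
move=> [hl hv]; split.
- by move=> e a b; rewrite hl mulrDr mulrCA.
- by move=> b hb; rewrite hv // mulr0.
Qed.

Lemma cont_zero : cont m (fun _ : B => (0 : K)).
Proof. exists 0%N; split => // c a b; by rewrite mulr0 addr0. Qed.

Lemma cont_sum r (f : nat -> B -> K) : (forall l, cont m (f l)) ->
  cont m (fun a => \sum_(l < r) f l a).
Proof.
move=> H; elim: r => [|r IH].
  have -> : (fun a => \sum_(l < 0) f l a) = (fun _ => 0) by apply: funext => a; rewrite big_ord0.
  exact: cont_zero.
have -> : (fun a => \sum_(l < r.+1) f l a) = (fun a => \sum_(l < r) f l a + f r a).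
  by apply: funext => a; rewrite big_ord_recr.
exact: cont_add.
Qed.

Section Ctens.
Variable F : tens B X.
Hypothesis HF : ctens m F.

Lemma F0 : F (fun _ => 0) = 0.
Proof.
case: HF => _ _ Hsc.
have := Hsc 0 (fun _ => 0) cont_zero; rewrite mul0r scale0r; exact.
Qed.

Lemma Fsum r (f : nat -> B -> K) : (forall l, cont m (f l)) ->
  F (fun a => \sum_(l < r) f l a) = \sum_(l < r) F (f l).
Proof.
move=> H; case: HF => _ Hadd _; elim: r => [|r IH].
  have -> : (fun a => \sum_(l < 0) f l a) = (fun _ => 0) by apply: funext => a; rewrite big_ord0.
  by rewrite F0 big_ord0.
have -> : (fun a => \sum_(l < r.+1) f l a) = (fun a => \sum_(l < r) f l a + f r a).
  by apply: funext => a; rewrite big_ord_recr.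
rewrite big_ord_recr /= -IH; apply: (Hadd (fun a => \sum_(l < r) f l a)) => //.
exact: cont_sum.
Qed.

Lemma tact_add c phi psi : cont m phi -> cont m psi ->
  tact m c F (fun a => phi a + psi a) = tact m c F phi + tact m c F psi.
Proof.
move=> h1 h2; case: HF => _ Hadd _.
rewrite !tactE //; last exact: cont_add.
exact: (Hadd (fun a => phi (c * a)) (fun a => psi (c * a)) (cont_shift _ h1) (cont_shift _ h2)).
Qed.

Lemma tact_scale c d phi : cont m phi ->
  tact m c F (fun a => d * phi a) = d *: tact m c F phi.
Proof.
move=> h1; case: HF => _ _ Hsc.
have h2 : cont m (fun a => d * phi a) by case: h1 => k hk; exists k; exact: cont_at_scale.
rewrite !tactE //.
exact: (Hsc d (fun a => phi (c * a)) (cont_shift _ h1)).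
Qed.

Lemma tact_van k c phi : cont_at m k phi -> ipow m k c -> tact m c F phi = 0.
Proof.
move=> hphi hc; case: HF => _ _ Hsc.
rewrite tactE; last by exists k.
have -> : (fun a => phi (c * a)) = (fun a => 0 * phi a).
  apply: funext => a; rewrite mul0r; case: hphi => _ hv; apply: hv; exact: ipowMr.
by rewrite (Hsc 0 phi) ?scale0r //; exists k.
Qed.

End Ctens.
End Tens.

Section Main.
Variables (K : fieldType) (B : comAlgType K) (m : B -> Prop).
Hypothesis Hid : is_ideal m.
Hypothesis Hnoeth : forall I : B -> Prop, is_ideal I -> fin_gen_ideal I.
Variable X : lmodType K.
Variable Y : tens B X -> Prop.
Hypothesis Hsub : submodule m Y.
Hypothesis Hpc : pseudoclosed m Y.

Lemma sspan_fspan k z : sspan m k Y z -> fspan m (ipow m k) Y z.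
Proof.
move=> [Hz [b [y [e [Hi [Hinf Hconv]]]]]].
have [s [Hs Hgen]] := Hnoeth (ipow_ideal Hid k).
pose r := size s. pose g := fun l => s`_l.
have Hgen' : forall a, ipow m k a -> exists c : nat -> B, a = \sum_(l < r) c l * g l.
  by move=> a /Hgen [c ->]; exists (fun l => c`_l).
have Hc0 : forall i, exists c : nat -> B,
    (forall l, ipow m (e i - k) (c l)) /\ b i = \sum_(l < r) c l * g l.
  move=> i; have [_ ke hb] := Hi i; apply: (ipow_decomp Hgen'); by rewrite subnK.
have [c Hc] := choice Hc0.
have Hy : forall i, ctens m (y i).
  by move=> i; case: Hsub => H _ _ _; apply: H; case: (Hi i).
pose w := fun j (phi : B -> K) => evlim (fun N => \sum_(i < N) tact m (c i j) (y i) phi).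
have Hstab : forall j kk phi N, cont_at m kk phi -> (forall i, (N <= i)%N -> (kk + k <= e i)%N) ->
   forall N', (N <= N')%N -> w j phi = \sum_(i < N') tact m (c i j) (y i) phi.
  move=> j kk phi N hphi hN N' hN'.
  have van : forall i, (N <= i)%N -> tact m (c i j) (y i) phi = 0.
    move=> i hi; apply: (tact_van Hid (Hy i) hphi).
    apply: (@ipow_le _ _ _ _ (e i - k)%N); last exact: (Hc i).1.
    have := hN i hi; lia.
  rewrite /w (@evlimE _ _ N); first by rewrite (sum_stab van hN').
  by move=> N'' hN''; rewrite (sum_stab van hN'').
have Hw : forall j, ctens m (w j).
  move=> j; split.
  - move=> phi hn; rewrite /w (@evlimE _ _ 0%N) => [|N _]; rewrite ?big_ord0 //.
    rewrite big1 ?big_ord0 // => i _; exact: tactN.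
  - move=> phi psi [k1 h1] [k2 h2].
    have h1' := cont_at_le h1 (leq_maxl k1 k2).
    have h2' := cont_at_le h2 (leq_maxr k1 k2).
    have h3 := cont_at_add h1' h2'.
    have [N hN] := Hinf (maxn k1 k2 + k)%N.
    rewrite (Hstab j _ _ N h3 hN N (leqnn N)) (Hstab j _ _ N h1' hN N (leqnn N)).
    rewrite (Hstab j _ _ N h2' hN N (leqnn N)) -big_split; apply: eq_bigr => i _.
    apply: tact_add => //; [by exists k1 | by exists k2].
  - move=> d phi [kk hk]. have [N hN] := Hinf (kk + k)%N.
    rewrite (Hstab j kk _ N (cont_at_scale d hk) hN N (leqnn N)).
    rewrite (Hstab j kk _ N hk hN N (leqnn N)) scaler_sumr; apply: eq_bigr => i _.
    apply: tact_scale => //; by exists kk.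
have HYw : forall j, Y (w j).
  move=> j; apply: Hpc; split; first exact: Hw.
  exists (fun i => c i j), y, (fun i => e i - k)%N; split; [|split].
  - move=> i; split => //; [by case: (Hi i) | exact: (Hc i).1].
  - move=> kk; have [N hN] := Hinf (kk + k)%N; exists N => i /hN; lia.
  - move=> kk; have [N hN] := Hinf (kk + k)%N; exists N => N' hN' phi hphi.
    exact: (Hstab j kk phi N hphi hN N' hN').
exists r, g, w; split.
  by move=> j hj; split; [apply: Hs; exact: mem_nth | exact: HYw].
apply: funext => phi /=. case: (pselect (cont m phi)) => [[kk hk]|hn]; last first.
  case: Hz => Hz0 _ _; rewrite Hz0 // big1 // => j _; exact: tactN.
have [N1 hN1] := Hinf (kk + k)%N. have [N0 hN0] := Hconv kk.
pose N := maxn N0 N1.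
rewrite (hN0 N (leq_maxl _ _) phi hk).
have E : forall j : 'I_r, tact m (g j) (w j) phi =
    \sum_(i < N) tact m (c i j) (y i) (fun a => phi (g j * a)).
  move=> j; rewrite tactE; last by exists kk.
  exact: (Hstab j kk _ N1 (cont_at_shift Hid (g j) hk) hN1 N (leq_maxr _ _)).
rewrite (eq_bigr _ (fun j _ => E j)) exchange_big /=. apply: eq_bigr => i _.
rewrite tactE; last by exists kk.
rewrite (Hc i).2.
have -> : (fun a => phi ((\sum_(l < r) c i l * g l) * a)) =
    (fun a => \sum_(l < r) (fun l a => phi (g l * (c i l * a))) l a).
  apply: funext => a /=; rewrite mulr_suml.
  rewrite (@linsum _ _ phi (proj1 hk) r (fun l => c i l * g l * a)); apply: eq_bigr => l _.
  by rewrite mulrA [g l * _]mulrC.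
rewrite (@Fsum _ _ m X (y i) (Hy i) r (fun l a => phi (g l * (c i l * a)))); last first.
  move=> l; exact: (cont_shift Hid (c i l) (cont_shift Hid (g l) (ex_intro _ kk hk))).
apply: eq_bigr => l _; rewrite tactE; first by [].
apply: cont_shift => //; by exists kk.
Qed.


Lemma fspan_sspan k z : fspan m (ipow m k) Y z -> sspan m k Y z.
Proof.
move=> [n [b [y [Hi ->]]]].
have HYz : forall n', (n' <= n)%N -> Y (fun phi => \sum_(i < n') tact m (b i) (y i) phi).
  elim=> [|n' IH] hn'.
  - have -> : (fun phi => \sum_(i < 0) tact m (b i) (y i) phi) = (@tzero K B X).
      by apply: funext => phi; rewrite big_ord0.
    by case: Hsub.
  - have -> : (fun phi => \sum_(i < n'.+1) tact m (b i) (y i) phi) =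
       tadd (fun phi => \sum_(i < n') tact m (b i) (y i) phi) (tact m (b n') (y n')).
      by apply: funext => phi; rewrite big_ord_recr.
    case: Hsub => _ _ Hadd Hact; apply: Hadd; first by apply: IH; lia.
    apply: Hact; exact: (Hi n' hn').2.
split; first by case: Hsub => H _ _ _; apply: H; apply: HYz.
exists (fun i => if (i < n)%N then b i else 0),
  (fun i => if (i < n)%N then y i else (@tzero K B X)),
  (fun i => if (i < n)%N then k else k + i)%N.
split; [|split].
- move=> i; case: ifP => hi.
    by have [h1 h2] := Hi i hi; split.
  split; [by case: Hsub | exact: leq_addr | exact: ipow0].
- move=> kk; exists (n + kk)%N => i hi.
  have hn : (i < n)%N = false by apply/negbTE; rewrite -leqNgt; lia.
  rewrite hn; lia.
- move=> kk; exists n => N hN phi _ /=.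
  rewrite [RHS](@sum_stab _ (fun i => tact m (if (i < n)%N then b i else 0)
    (if (i < n)%N then y i else @tzero K B X) phi) n N) //.
    by apply: eq_bigr => i _; rewrite ltn_ord.
  move=> i hi; have hn : (i < n)%N = false by apply/negbTE; rewrite -leqNgt.
  by rewrite hn /tact; case: pselect.
Qed.

End Main.


(* C is modelled as R[i] for R : realType (a copy of the real numbers). *)
Theorem lemma2p23 (R : realType) (B : comAlgType R[i]) (m : B -> Prop)
    (X : lmodType R[i]) (Y : tens B X -> Prop) :
  deformation_base m -> submodule m Y -> pseudoclosed m Y ->
  (forall z, sspan m 0 Y z <-> fspan m (fun _ => True) Y z) /\
  (forall (k : nat) z, sspan m k Y z <-> fspan m (ipow m k) Y z).
Proof.
move=> [Hid _ _ _ [Hnoeth _ _]] Hsub Hpc.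
have main : forall k z, sspan m k Y z <-> fspan m (ipow m k) Y z.
  move=> k z; split; [exact: sspan_fspan | exact: fspan_sspan].
split; [move=> z; exact: (main 0%N z) | exact: main].
Qed.
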